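(* The map $\mathcal W^{\mathrm m,\mathrm P}_r:\mathbf{roPG}\to\mathbb S^{\mathrm{m},\mathbb P}_r$ is compositional: for all roPGs of appropriate types, $\mathcal W^{\mathrm m,\mathrm P}_r(\mathcal C;\mathcal D)=\mathcal W^{\mathrm m,\mathrm P}_r(\mathcal C);\mathcal W^{\mathrm m,\mathrm P}_r(\mathcal D)$, $\mathcal W^{\mathrm m,\mathrm P}_r(\mathcal C\oplus\mathcal D)=\mathcal W^{\mathrm m,\mathrm P}_r(\mathcal C)\oplus\mathcal W^{\mathrm m,\mathrm P}_r(\mathcal D)$, and $\mathrm{tr}^l_{m,n}(\mathcal W^{\mathrm m,\mathrm P}_r(\mathcal E))=\mathcal W^{\mathrm m,\mathrm P}_r(\mathrm{tr}^l_{m,n}(\mathcal E))$.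
   Context: Notation: $[k]=\{1,\dots,k\}$; $X+Y$ disjoint union; $T(X)=X+\mathbb R\times X+\{\exists^*,\forall^*\}$; diagrammatic composition. An roMPG $\mathcal A:m\to n$ is $(m,n,Q,E,\rho,w)$: $Q$ finite set of positions, entrances $[m]$, exits $[n]$ (pairwise disjoint with $Q$), edges $E\subseteq([m]+Q)\times([n]+Q)$ with each entrance having exactly one successor and each exit at most one predecessor, $\rho:Q\to\{\exists,\forall\}$, $w:Q\to\mathbb R$. An roPG is an roMPG in which each element of $[m]+Q$ has at most one successor. For $\mathcal C:m\to l$, $\mathcal D:l\to n$, $\mathcal C;\mathcal D$ has positions $Q^{\mathcal C}+Q^{\mathcal D}$ with inherited roles/weights and edges: those of $\mathcal C$ from $[m]+Q^{\mathcal C}$ to $Q^{\mathcal C}$; those of $\mathcal D$ from $Q^{\mathcal D}$ to $[n]+Q^{\mathcal D}$; $(s,s')$ with $s\in[m]+Q^{\mathcal C}$, $s'\in[n]+Q^{\mathcal D}$ whenever some $i\in[l]$ has $(s,i)\in E^{\mathcal C}$ and $(i,s')\in E^{\mathcal D}$. $\mathcal C\oplus\mathcal D$ is the disjoint union with the second's entrances/exits shifted by the first's numbers of entrances/exits. For $\mathcal E:l+m\to l+n$, $\mathrm{tr}^l_{m,n}(\mathcal E):m\to n$ keeps positions, roles, weights, and $(s,s')\in([m]+Q)\times([n]+Q)$ is an edge iff there are $k\ge0$, $i_1,..,i_k\in[l]$ with $(\hat s,i_1),(i_1,i_2),..,(i_k,\hat s')\in E^{\mathcal E}$ ($k=0$: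 $(\hat s,\hat s')\in E^{\mathcal E}$), $i_j$ read as exit when target, entrance when source, $\hat s=l+s$ for open ends, $\hat s=s$ for positions. $\mathbf{roPG}$ has objects $\mathbb N$ and arrows roPGs up to isomorphism. For an roPG $\mathcal C:m\to n$ and $i\in[m]$, $\pi^{\mathcal C}_i=(s_j)_{j\in J}$ ($J=\{0..M\}$ or $\mathbb N$) is the unique maximal sequence with $s_0=i$, $(s_j,s_{j+1})\in E$. Its denotation $[\![\pi]\!]\in T([n])$: $s_1$ if $J=\{0,1\}$ and $s_1$ is an exit; $(\sum_{j=1}^{M-1}w(s_j),s_M)$ if $M\ge2$, $s_M$ an exit; $\exists^*$ if $J$ finite and $s_M$ a $\forall$-position, or $J$ infinite with $\liminf_N\frac1N\sum_{j=1}^Nw(s_j)\ge0$; $\forall^*$ if $J$ finite and $s_M$ an $\exists$-position, or $J$ infinite with that liminf $<0$. $\mathbb S^{\mathrm{m},\mathbb P}_r$: objects $\mathbb N$; arrows $f:m\to n$ are functions $[m]\to T([n])$ with: for $i\ne j$, $f(i)\notin[n]$ or $f(j)\notin\{f(i)\}\cup\mathbb R\times\{f(i)\}$; hom-sets ordered pointwise by the least order on $T([n])$ with $(r_1,i)\le(r_2,i)$ if $r_1\ge r_2$, $\exists^*\le z\le\forall^*$. Operations: $(f;g)(i)=f(i)$ if $f(i)\in\{\exists^*,\forall^*\}$; $g(j)$ if $f(i)=j$; $g(j)$ if $f(i)=(r,j)$, $g(j)\in\{\exists^*,\forall^*\}$; $(r,k)$ if $f(i)=(r,j)$, $g(j)=k$;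 $(r+r',k)$ if $f(i)=(r,j)$, $g(j)=(r',k)$. $(f\oplus g)(i)=f(i)$ ($i\le m$), $(f\oplus g)(m+i)$ is $g(i)$ with its index $j$ (if any) shifted to $n+j$. Trace of $f:l+m\to l+n$ at $i$: $v_0=l+i$; if $j=0$ or $v_j\in[l]$, $v_{j+1}=f(v_j)$; if $v_j=(r,k)$, $k\in[l]$, $v_{j+1}=f(k)$; otherwise stop. If finite $(v_0..v_K)$ with $S$ the sum of first components of $v_j\in\mathbb R\times[l+n]$ ($1\le j\le K$): $v_K$ if $v_K\in\{\exists^*,\forall^*\}$; $k$ if $v_K=l+k$ and $v_j\in[l]$ for $1\le j<K$; $(S,k)$ if $v_K=l+k$ and some earlier $v_j\in\mathbb R\times[l]$; $(S,k)$ if $v_K=(r,l+k)$. If infinite, with $w'_t$ the first components of the (infinitely many) entries in $\mathbb R\times[l]$: $\exists^*$ if $\liminf_N\frac1N\sum_{t\le N}w'_t\ge0$, else $\forall^*$. $\mathcal W^{\mathrm m,\mathrm P}_r$ is the identity on objects and sends $\mathcal C:m\to n$ to $i\mapsto[\![\pi^{\mathcal C}_i]\!]$. *)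

(* Defs.v *)
From Stdlib Require Import Reals ClassicalEpsilon.
From Coquelicot Require Import Coquelicot.
From mathcomp Require Import ssreflect ssrfun ssrbool eqtype ssrnat seq choice fintype.

Unset Printing Implicit Defensive.

(* T(X) = X + R x X + {exists*, forall*}                               *)
Inductive T (X : Type) : Type :=
  | TExit of X
  | TW of R & X
  | TEx
  | TAll.
Arguments TExit {X} _.
Arguments TW {X} _ _.
Arguments TEx {X}.
Arguments TAll {X}.

Definition Tmap {X Y : Type} (h : X -> Y) (z : T X) : T Y :=
  match z with
  | TExit x => TExit (h x)
  | TW r x => TW r (h x)
  | TEx => TEx
  | TAll => TAll
  end.

Inductive Role : Type := RExists | RForall.

(* roMPGs  m -> n : positions Q (finite), entrances 'I_m, exits 'I_n.  *)
Record roMPG (m n : nat) : Type := RoMPG {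
  pos : finType;
  edge : 'I_m + pos -> 'I_n + pos -> Prop;
  role : pos -> Role;
  wt : pos -> R
}.
Arguments RoMPG {m n}.
Arguments pos {m n} _.
Arguments edge {m n} _ _ _.
Arguments role {m n} {_} _.
Arguments wt {m n} {_} _.

Definition is_roMPG {m n} (A : roMPG m n) : Prop :=
  (forall i : 'I_m, exists! t, edge A (inl i) t) /\
  (forall (j : 'I_n) s s', edge A s (inl j) -> edge A s' (inl j) -> s = s').

Definition is_roPG {m n} (A : roMPG m n) : Prop :=
  is_roMPG A /\ (forall s t t', edge A s t -> edge A s t' -> t = t').

Definition seq_pos {m l n} (C : roMPG m l) (D : roMPG l n) : finType :=
  Finite.clone _ (pos C + pos D)%type.

Definition seq_src {m l n} (C : roMPG m l) (D : roMPG l n)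
  (s : 'I_m + pos C) : 'I_m + seq_pos C D :=
  match s with inl i => inl i | inr q => inr (inl q) end.
Definition seq_tgt {m l n} (C : roMPG m l) (D : roMPG l n)
  (t : 'I_n + pos D) : 'I_n + seq_pos C D :=
  match t with inl j => inl j | inr q => inr (inr q) end.

Definition seq_edge {m l n} (C : roMPG m l) (D : roMPG l n)
  (s : 'I_m + seq_pos C D) (t : 'I_n + seq_pos C D) : Prop :=
  (exists sc qc, s = seq_src C D sc /\ t = inr (inl qc) /\ edge C sc (inr qc)) \/
  (exists qd td, s = inr (inr qd) /\ t = seq_tgt C D td /\ edge D (inr qd) td) \/
  (exists sc td (i : 'I_l), s = seq_src C D sc /\ t = seq_tgt C D td /\
     edge C sc (inl i) /\ edge D (inl i) td).

Definition roseq {m l n} (C : roMPG m l) (D : roMPG l n) : roMPG m n :=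
  RoMPG (seq_pos C D) (@seq_edge m l n C D)
    (fun q => match q with inl q => role q | inr q => role q end)
    (fun q => match q with inl q => wt q | inr q => wt q end).

Definition sum_pos {m1 n1 m2 n2} (C : roMPG m1 n1) (D : roMPG m2 n2) : finType :=
  Finite.clone _ (pos C + pos D)%type.

Definition sum_edge {m1 n1 m2 n2} (C : roMPG m1 n1) (D : roMPG m2 n2)
  (s : 'I_(m1 + m2) + sum_pos C D) (t : 'I_(n1 + n2) + sum_pos C D) : Prop :=
  (exists sc tc, edge C sc tc /\
     s = match sc with inl i => inl (lshift m2 i) | inr q => inr (inl q) end /\
     t = match tc with inl j => inl (lshift n2 j) | inr q => inr (inl q) end) \/
  (exists sd td, edge D sd td /\
     s = match sd with inl i => inl (rshift m1 i) | inr q => inr (inr q) end /\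
     t = match td with inl j => inl (rshift n1 j) | inr q => inr (inr q) end).

Definition rosum {m1 n1 m2 n2} (C : roMPG m1 n1) (D : roMPG m2 n2)
  : roMPG (m1 + m2) (n1 + n2) :=
  RoMPG (sum_pos C D) (@sum_edge m1 n1 m2 n2 C D)
    (fun q => match q with inl q => role q | inr q => role q end)
    (fun q => match q with inl q => wt q | inr q => wt q end).

(* chain s i_1 ... i_k t : (s,i_1),(i_1,i_2),...,(i_k,t) are edges of E,
   with i_j read as exit (lshift n) when target, entrance (lshift m) when source *)
Fixpoint tr_chain {l m n} (E : roMPG (l + m) (l + n))
  (s : 'I_(l + m) + pos E) (ks : seq 'I_l) (t : 'I_(l + n) + pos E) : Prop :=
  match ks with
  | [::] => edge E s t
  | i :: ks' => edge E s (inl (lshift n i)) /\ tr_chain E (inl (lshift m i)) ks' t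
  end.

Definition tr_edge {l m n} (E : roMPG (l + m) (l + n))
  (s : 'I_m + pos E) (t : 'I_n + pos E) : Prop :=
  exists ks : seq 'I_l,
    tr_chain E (match s with inl i => inl (rshift l i) | inr q => inr q end) ks
             (match t with inl j => inl (rshift l j) | inr q => inr q end).

Definition rotrace {l m n} (E : roMPG (l + m) (l + n)) : roMPG m n :=
  RoMPG (pos E) (@tr_edge l m n E) (@role _ _ E) (@wt _ _ E).

(* liminf_N (1/N) sum_{j=1}^N w_j >= 0, for w_1, w_2, ... given as w 0, w 1, ... *)
Definition mean_liminf_nonneg (w : nat -> R) : Prop :=
  Rbar_le (Rbar.Finite 0%R) (LimInf_seq (fun N => sum_f_R0 w N / INR (S N))).

(* finite path i, s_1 .. s_{M-1} (positions qs), s_M = t *)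
Fixpoint path_chain {m n} (C : roMPG m n) (s : 'I_m + pos C) (qs : seq (pos C))
  (t : 'I_n + pos C) : Prop :=
  match qs with
  | [::] => edge C s t
  | q :: qs' => edge C s (inr q) /\ path_chain C (inr q) qs' t
  end.

Definition fin_maxpath {m n} (C : roMPG m n) (i : 'I_m) (qs : seq (pos C))
  (t : 'I_n + pos C) : Prop :=
  path_chain C (inl i) qs t /\
  (match t with inl _ => True | inr q => forall t', ~ edge C (inr q) t' end).

(* infinite path i, s_1, s_2, ... where s_{j+1} = s j *)
Definition inf_path {m n} (C : roMPG m n) (i : 'I_m) (s : nat -> pos C) : Prop :=
  edge C (inl i) (inr (s 0%nat)) /\ forall j, edge C (inr (s j)) (inr (s (S j))).

Definition fin_den {m n} (C : roMPG m n) (qs : seq (pos C)) (t : 'I_n + pos C)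
  : T 'I_n :=
  match t with
  | inl j => if qs is [::] then TExit j else TW (foldr Rplus 0%R (map (@wt _ _ C) qs)) j
  | inr q => match role q with RForall => TEx | RExists => TAll end
  end.

Definition W_den {m n} (C : roMPG m n) (i : 'I_m) (d : T 'I_n) : Prop :=
  (exists qs t, fin_maxpath C i qs t /\ d = fin_den C qs t) \/
  (exists s, inf_path C i s /\
     ((mean_liminf_nonneg (fun j => wt (s j)) /\ d = TEx) \/
      (~ mean_liminf_nonneg (fun j => wt (s j)) /\ d = TAll))).

(* W^{m,P}_r(C) : i |-> [[pi^C_i]]  (pi^C_i unique for an roPG) *)
Definition Wmp {m n} (C : roMPG m n) : 'I_m -> T 'I_n :=
  fun i => epsilon (inhabits TEx) (W_den C i).

Definition S_arrow {m n} (f : 'I_m -> T 'I_n) : Prop :=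
  forall i j : 'I_m, i <> j ->
    forall k : 'I_n, f i = TExit k -> f j <> TExit k /\ forall r, f j <> TW r k.

Definition Scomp {m l n} (f : 'I_m -> T 'I_l) (g : 'I_l -> T 'I_n) : 'I_m -> T 'I_n :=
  fun i => match f i with
  | TEx => TEx
  | TAll => TAll
  | TExit j => g j
  | TW r j => match g j with
              | TEx => TEx
              | TAll => TAll
              | TExit k => TW r k
              | TW r' k => TW (r + r') k
              end
  end.

Definition Ssum {m1 n1 m2 n2} (f : 'I_m1 -> T 'I_n1) (g : 'I_m2 -> T 'I_n2)
  : 'I_(m1 + m2) -> T 'I_(n1 + n2) :=
  fun i => match split i with
  | inl i1 => Tmap (lshift n2) (f i1)
  | inr i2 => Tmap (@rshift n1 n2) (g i2)
  end.

(* the trace sequence: u j = v_{j+1} (Some) while defined, None after stopping *)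
Definition tr_next {l m n} (f : 'I_(l + m) -> T 'I_(l + n)) (v : T 'I_(l + n))
  : option (T 'I_(l + n)) :=
  match v with
  | TExit x | TW _ x => match split x with
                       | inl k => Some (f (lshift m k))
                       | inr _ => None
                       end
  | _ => None
  end.

Fixpoint tr_seq {l m n} (f : 'I_(l + m) -> T 'I_(l + n)) (i : 'I_m) (j : nat)
  : option (T 'I_(l + n)) :=
  match j with
  | 0 => Some (f (rshift l i))
  | S j' => match tr_seq f i j' with Some v => tr_next f v | None => None end
  end.

Definition is_wl {l n} (o : option (T 'I_(l + n))) : Prop :=
  exists r x k, o = Some (TW r x) /\ split x = inl k.

Definition weight_of {l n} (o : option (T 'I_(l + n))) : R :=
  match o with Some (TW r _) => r | _ => 0%R end.

Definition Strace_den {l m n} (f : 'I_(l + m) -> T 'I_(l + n)) (i : 'I_m)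
  (d : T 'I_n) : Prop :=
  let u := tr_seq f i in
  let Ssum K := sum_f_R0 (fun j => weight_of (u j)) K in
  (* finite cases: last entry v_K = u K *)
  (exists K, u K = Some TEx /\ d = TEx) \/
  (exists K, u K = Some TAll /\ d = TAll) \/
  (exists K x k, u K = Some (TExit x) /\ split x = inr k /\
     (((forall j, (j < K)%nat -> ~ is_wl (u j)) /\ d = TExit k) \/
      ((exists j, (j < K)%nat /\ is_wl (u j)) /\ d = TW (Ssum K) k))) \/
  (exists K r x k, u K = Some (TW r x) /\ split x = inr k /\ d = TW (Ssum K) k) \/
  (* infinite case: phi enumerates (increasingly) the entries in R x [l] *)
  ((forall j, u j <> None) /\
   exists phi : nat -> nat,
     (forall t, (phi t < phi (S t))%nat) /\
     (forall j, is_wl (u j) <-> exists t, phi t = j) /\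
     ((mean_liminf_nonneg (fun t => weight_of (u (phi t))) /\ d = TEx) \/
      (~ mean_liminf_nonneg (fun t => weight_of (u (phi t))) /\ d = TAll))).

Definition Strace {l m n} (f : 'I_(l + m) -> T 'I_(l + n)) : 'I_m -> T 'I_n :=
  fun i => epsilon (inhabits TEx) (Strace_den f i).

(* Main.v *)
Require Import Defs.
From Stdlib Require Import Reals Lra ClassicalEpsilon Classical FunctionalExtensionality.
From Coquelicot Require Import Coquelicot.
From mathcomp Require Import ssreflect ssrfun ssrbool eqtype ssrnat seq choice fintype.
From mathcomp Require path.
Import Defs.
Unset Printing Implicit Defensive.


Fixpoint psum (a : nat -> R) (N : nat) : R :=
  match N with 0 => 0%R | S N' => (psum a N' + a N')%R end.

Lemma sum_f_psum a N : sum_f_R0 a N = psum a (S N).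
Proof. elim: N => [|N IH] /=; first lra. rewrite IH /=. lra. Qed.

Definition RC (a : nat -> R) : Prop :=
  forall eps, (0 < eps)%R -> exists C, forall N, (- eps * INR N - C <= psum a N)%R.

Lemma init_bound (g : nat -> R) K : exists C, (0 <= C)%R /\ forall N, (N <= K)%N -> (- C <= g N)%R.
Proof.
elim: K => [|K [C [C0 HC]]].
  exists (Rabs (g 0%N)); split; first exact: Rabs_pos.
  move=> N; rewrite leqn0 => /eqP ->. have := Rabs_pos (g 0%N). 
  have := Rle_abs (- g 0%N). rewrite Rabs_Ropp. lra.
exists (Rmax C (Rabs (g K.+1))); split.
  apply: Rle_trans (Rmax_l _ _). done.
move=> N; rewrite leq_eqVlt => /orP [/eqP ->|HN].
  have := Rmax_r C (Rabs (g K.+1)). have := Rle_abs (- g K.+1). rewrite Rabs_Ropp. lra.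
have := HC N HN. have := Rmax_l C (Rabs (g K.+1)). lra.
Qed.

Lemma archi_nat (x : R) : exists N : nat, (x < INR N)%R.
Proof.
have [n Hn] := INR_archimed 1 x ltac:(lra). exists n. lra.
Qed.

Lemma RC_eventually a : RC a -> forall M, (M < 0)%R ->
  exists N, forall n, (N <= n)%N -> (M < sum_f_R0 a n / INR (S n))%R.
Proof.
move=> H M HM.
have [C HC] := H (- M / 2)%R ltac:(lra).
have [N HN] := archi_nat (Rabs C * (- 2 / M))%R.
exists N => n Hn. rewrite sum_f_psum.
have HS : (0 < INR (S n))%R by apply: lt_0_INR; apply/ltP.
have HNn : (INR N <= INR (S n))%R by apply: le_INR; apply/leP; apply: leq_trans Hn _.
have := HC (S n). move=> Hp.
apply (Rmult_lt_reg_r (INR (S n))); first done.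
rewrite /Rdiv Rmult_assoc Rinv_l; last lra.
rewrite Rmult_1_r.
have HaC := Rle_abs C.
have : (Rabs C * (-2 / M) < INR (S n))%R by lra.
move=> H2.
have : (Rabs C * (-2) > INR (S n) * M)%R.
  have Hm : (0 < - M)%R by lra.
  have := Rmult_lt_compat_r (- M) _ _ Hm H2.
  rewrite /Rdiv. have -> : (Rabs C * (-2 * / M) * - M = Rabs C * 2)%R.
    field. lra.
  lra.
nra.
Qed.

Lemma mean_RC a : mean_liminf_nonneg a <-> RC a.
Proof.
rewrite /mean_liminf_nonneg.
set u := fun N => (sum_f_R0 a N / INR (S N))%R.
have [l Hl] := ex_LimInf_seq u.
rewrite (is_LimInf_seq_unique _ _ Hl).
have key : forall eps, (0 < eps)%R -> (exists N0, forall n, (N0 <= n)%N -> (- eps < u n)%R) ->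
  exists C, forall N, (- eps * INR N - C <= psum a N)%R.
  move=> eps He [N0 HN0].
  have [C [C0 HC]] := init_bound (psum a) N0.
  exists C => N. case: (leqP N N0) => HN.
    have := HC N HN. have : (0 <= INR N)%R by apply: pos_INR. nra.
  case: N HN => [//|N] HN.
  have := HN0 N HN. rewrite /u sum_f_psum => H1.
  have HS : (0 < INR (S N))%R by apply: lt_0_INR; apply/ltP.
  have : (- eps * INR (S N) < psum a (S N))%R.
    have := Rmult_lt_compat_r (INR (S N)) _ _ HS H1.
    rewrite /Rdiv Rmult_assoc Rinv_l; lra.
  lra.
split.
  case: l Hl => [l||] Hl /= H0.
  - move=> eps He. apply: key => //.
    have [_ [N HN]] := Hl (mkposreal eps He).
    exists N => n Hn. have := HN n (elimT leP Hn). simpl. lra.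
  - move=> eps He. apply: key => //. have [N HN] := Hl (- eps)%R. exists N => n Hn. exact: HN (elimT leP Hn).
  - done.
move=> H.
case: l Hl => [l||] Hl /=.
- apply: Rnot_lt_le => Hneg.
  have [N HN] := RC_eventually a H (l / 2)%R ltac:(lra).
  have Hp : (0 < - l / 2)%R by lra.
  have [H1 _] := Hl (mkposreal (- l / 2) Hp).
  have [n [Hn1 Hn2]] := H1 N.
  simpl in Hn2. have := HN n (introT leP Hn1). rewrite /u in Hn2. lra.
- done.
- have [N HN] := RC_eventually a H (-1)%R ltac:(lra).
  have [n [Hn1 Hn2]] := Hl (-1)%R N.
  have := HN n (introT leP Hn1). rewrite /u in Hn2. lra.
Qed.


Close Scope R_scope.

Lemma psum_shift a k M : psum a (k + M) = (psum a k + psum (fun j => a (j + k)%N) M)%R.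
Proof. elim: M => [|M IH] /=; first by rewrite addn0; lra. rewrite addnS /= IH addnC. lra. Qed.

Lemma psum_ext a b N : (forall j, (j < N)%N -> a j = b j) -> psum a N = psum b N.
Proof.
elim: N => [|N IH] H //=. rewrite IH ?H //. move=> j Hj; apply: H; exact: ltnW.
Qed.

Lemma RC_shift a b k1 k2 : (forall j, a (j + k1)%N = b (j + k2)%N) -> RC a -> RC b.
Proof.
move=> Hab H eps He.
have [C HC] := H eps He.
have [C0 [C00 HC0]] := init_bound (psum b) k2.
exists (C0 + Rabs C + eps * INR k1 + Rabs (psum b k2) + Rabs (psum a k1))%R => N.
have Hk1 := pos_INR k1. have Ha1 := Rabs_pos (psum b k2). have Ha2 := Rabs_pos (psum a k1).
have Hk1e : (0 <= eps * INR k1)%R by nra.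
case: (leqP N k2) => HN.
  have := HC0 N HN. have := pos_INR N. have := Rabs_pos C. nra.
rewrite -(subnKC (ltnW HN)).
set M := (N - k2)%N.
rewrite psum_shift.
have E : psum (fun j => b (j + k2)%N) M = (psum a (k1 + M) - psum a k1)%R.
  rewrite psum_shift. rewrite (psum_ext _ (fun j => a (j + k1)%N)); first lra. move=> j _; by rewrite Hab.
rewrite E. have := HC (k1 + M)%N. rewrite !plus_INR !Rmult_plus_distr_l.
have := Rle_abs (psum b k2). have := Rle_abs (psum a k1).
have := Rle_abs (- psum b k2). rewrite Rabs_Ropp.
have := pos_INR M. have := Rle_abs C. have : (0 <= eps * INR k2)%R by have := pos_INR k2; nra. rewrite -!Ropp_mult_distr_l. clearbody M. move=> *. lra.
Qed.

Lemma psum_lb a B M : (forall j, Rabs (a j) <= B)%R -> (- (INR M * B) <= psum a M)%R.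
Proof.
move=> HB. elim: M => [|M IH]; first by simpl; lra.
change (psum a M.+1) with (psum a M + a M)%R. rewrite S_INR. have := HB M. have := Rle_abs (- a M). rewrite Rabs_Ropp. lra.
Qed.

Lemma seg_RC (w v : nat -> R) (n : nat -> nat) (B : R) (L : nat) :
  (forall j, Rabs (w j) <= B)%R ->
  n 0%N = 0%N -> (forall t, n t < n t.+1 <= n t + L)%N ->
  (forall t, psum v t = psum w (n t)) ->
  (RC w <-> RC v).
Proof.
move=> HB Hn0 Hn Hv.
have HL : (1 <= L)%N.
  have /andP[h1 h2] := Hn 0%N. rewrite -(leq_add2l (n 0%N)) addn1. exact: leq_trans h1 h2.
have HnL : forall t, (n t <= L * t)%N.
  elim=> [|t IH]; first by rewrite Hn0.
  have /andP[_ h2] := Hn t. rewrite mulnS. apply: leq_trans h2 _. by rewrite addnC leq_add2l.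
have Hnt : forall t, (t <= n t)%N.
  elim=> [|t IH] //. have /andP[h1 _] := Hn t. exact: leq_ltn_trans IH h1.
have HLpos : (0 < INR L)%R. apply: lt_0_INR. apply/ltP. done.
have HB0 : (0 <= B)%R. have := HB 0%N. have := Rabs_pos (w 0%N). lra.
split.
- move=> H eps He.
  have [C HC] := H (eps / INR L)%R ltac:(apply: Rdiv_lt_0_compat; lra).
  exists C => t. rewrite Hv. have := HC (n t).
  have : (INR (n t) <= INR L * INR t)%R. rewrite -mult_INR. apply: le_INR. apply/leP. exact: HnL.
  move=> h1 h2.
  have : (eps / INR L * INR (n t) <= eps * INR t)%R.
    apply (Rmult_le_reg_l (INR L)); first done.
    have -> : (INR L * (eps / INR L * INR (n t)) = eps * INR (n t))%R. field. lra.
    have -> : (INR L * (eps * INR t) = eps * (INR L * INR t))%R. ring.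
    apply: Rmult_le_compat_l; lra.
  lra.
- move=> H eps He.
  have [C HC] := H eps He.
  exists (C + INR L * B)%R => N.
  have [t /andP [Ht1 Ht2]] : exists t, (n t <= N < n t.+1)%N.
    elim: N => [|N [t /andP [h1 h2]]].
      exists 0%N. rewrite Hn0 /=. have /andP[h _] := Hn 0%N. by rewrite -Hn0.
    case: (ltngtP N.+1 (n t.+1)) => h3.
    + exists t. by rewrite h3 (leq_trans h1 (leqnSn N)).
    + move: h3; rewrite ltnS => h3. by move: h2; rewrite ltnNge h3.
    + exists t.+1. rewrite -h3 leqnn /=. have /andP[h _] := Hn t.+1. by rewrite h3.
  rewrite -(subnKC Ht1) psum_shift -Hv.
  have := HC t. have := psum_lb (fun j => w (j + n t)%N) B (N - n t) (fun j => HB _).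
  have : (INR (N - n t) <= INR L)%R.
    apply: le_INR; apply/leP. rewrite leq_subLR. have /andP[_ h] := Hn t.
    exact: ltnW (leq_trans Ht2 h).
  have : (INR t <= INR (n t + (N - n t)))%R. apply: le_INR; apply/leP. rewrite subnKC //. exact: leq_trans (Hnt t) Ht1.
  move=> h1 h2 h3 h4. nra.
Qed.



Section Gen.
Context {m n : nat} (A : roMPG m n).

Definition det : Prop := forall s t t', edge A s t -> edge A s t' -> t = t'.
Definition term (t : 'I_n + pos A) : Prop :=
  match t with inl _ => True | inr q => forall t', ~ edge A (inr q) t' end.

Lemma pc_cat s p1 q p2 t :
  path_chain A s (p1 ++ q :: p2) t <-> path_chain A s p1 (inr q) /\ path_chain A (inr q) p2 t.
Proof.
elim: p1 s => [|q1 p1 IH] s /=; first by [].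
rewrite IH. tauto.
Qed.

Lemma pc_rcons s p q t :
  path_chain A s (rcons p q) t <-> path_chain A s p (inr q) /\ edge A (inr q) t.
Proof. by rewrite -cats1 pc_cat. Qed.

Lemma pc_same (Hd : det) s p1 p2 t1 t2 :
  path_chain A s p1 t1 -> path_chain A s p2 t2 -> size p1 = size p2 -> p1 = p2 /\ t1 = t2.
Proof.
elim: p1 s p2 => [|q1 p1 IH] s [|q2 p2] //=.
- move=> h1 h2 _. split => //. exact: Hd h1 h2.
- move=> [h1 h1'] [h2 h2'] [hs].
  have := Hd _ _ _ h1 h2 => -[Hq].
  subst q2. have [-> ->] := IH _ _ h1' h2' hs. done.
Qed.

Lemma pc_first s p t : path_chain A s p t -> exists t', edge A s t'.
Proof. case: p => [|q p] /=; [by exists t | by move=> [h _]; exists (inr q)]. Qed.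

Lemma pc_term (Hd : det) s p1 p2 t1 t2 :
  path_chain A s p1 t1 -> term t1 -> path_chain A s p2 t2 -> term t2 -> p1 = p2 /\ t1 = t2.
Proof.
elim: p1 s p2 => [|q1 p1 IH] s [|q2 p2] //=.
- move=> h1 _ h2 _. split => //. exact: Hd h1 h2.
- move=> h1 T1 [h2 h2'] _. have E := Hd _ _ _ h1 h2. subst t1.
  have [t' ht'] := pc_first _ _ _ h2'. by case: (T1 t').
- move=> [h1 h1'] _ h2 T2. have E := Hd _ _ _ h1 h2. subst t2.
  have [t' ht'] := pc_first _ _ _ h1'. by case: (T2 t').
- move=> [h1 h1'] T1 [h2 h2'] T2.
  have := Hd _ _ _ h1 h2 => -[Hq].
  subst q2. have [-> ->] := IH _ _ h1' T1 h2' T2. done.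
Qed.

Lemma mkseq_add (X : Type) (f : nat -> X) N M :
  mkseq f (N + M) = mkseq f N ++ mkseq (fun j => f (N + j)) M.
Proof. rewrite /mkseq iotaD map_cat add0n. congr (_ ++ _). rewrite -{1}(addn0 N) iotaDl -map_comp. done. Qed.

Lemma inf_prefix i s : inf_path A i s -> forall N, path_chain A (inl i) (mkseq s N) (inr (s N)).
Proof.
move=> [h0 hS]. elim=> [|N IH]; first done.
rewrite -addn1 mkseq_add addn1 pc_cat addn0. split; [exact: IH | exact: hS].
Qed.

Lemma inf_of_prefix i s K :
  (forall N, (K <= N)%N -> path_chain A (inl i) (mkseq s N) (inr (s N))) -> inf_path A i s.
Proof.
move=> H.
have H' : forall N, path_chain A (inl i) (mkseq s N) (inr (s N)).
  move=> N. case: (leqP K N) => hK; first exact: H.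
  have := H K (leqnn K). rewrite -(subnKC (ltnW hK)) mkseq_add.
  case E: (K - N)%N => [|k]. by move: hK; rewrite -subn_gt0 E.
  rewrite /= pc_cat addn0. by case.
split.
  exact: (H' 0%N).
move=> j. have := H' j.+1. rewrite -addn1 mkseq_add addn1 /= pc_cat addn0. by case.
Qed.

Lemma inf_same (Hd : det) i s1 s2 : inf_path A i s1 -> inf_path A i s2 -> forall j, s1 j = s2 j.
Proof.
move=> [a1 b1] [a2 b2]. elim=> [|j IH].
  by have [] := Hd _ _ _ a1 a2.
have := b2 j. rewrite -IH => h. by have [] := Hd _ _ _ (b1 j) h.
Qed.

Lemma W_uniq (Hd : det) i d1 d2 : W_den A i d1 -> W_den A i d2 -> d1 = d2.
Proof.
have finf : forall qs t s, fin_maxpath A i qs t -> inf_path A i s -> False.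
  move=> qs t s [h1 T1] hs.
  have h2 := inf_prefix _ _ hs (size qs).
  have [_ E] := pc_same Hd _ _ _ _ _ h1 h2 (esym (size_mkseq _ _)).
  subst t. case: hs => _ hs. exact: T1 _ (hs (size qs)).
move=> [[qs1 [t1 [h1 ->]]]|[s1 [hs1 c1]]] [[qs2 [t2 [h2 ->]]]|[s2 [hs2 c2]]].
- case: h1 h2 => h1 T1 [h2 T2]. by have [-> ->] := pc_term Hd _ _ _ _ _ h1 T1 h2 T2.
- by case: (finf _ _ _ h1 hs2).
- by case: (finf _ _ _ h2 hs1).
- have E : (fun j => wt (s1 j)) = (fun j => wt (s2 j)).
    apply: functional_extensionality => j. by rewrite (inf_same Hd _ _ _ hs1 hs2 j).
  rewrite E in c1. by case: c1 => [[a ->]|[a ->]]; case: c2 => [[b ->]|[b ->]].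
Qed.

Lemma Wmp_eq (Hd : det) i d : W_den A i d -> Wmp A i = d.
Proof.
move=> H. have := epsilon_spec (inhabits TEx) (W_den A i) (ex_intro _ d H).
rewrite -/(Wmp A i) => H'. exact: W_uniq Hd _ _ _ H' H.
Qed.

Lemma W_exists i : (exists t, edge A (inl i) t) -> exists d, W_den A i d.
Proof.
move=> [t0 ht0].
case: (classic (exists qs t, fin_maxpath A i qs t)) => [[qs [t H]]|Hno].
  exists (fin_den A qs t). left. by exists qs, t.
have Hall : forall qs t, path_chain A (inl i) qs t ->
    exists q, t = inr q /\ exists q', edge A (inr q) (inr q').
  move=> qs t H. case: t H => [j|q] H.
    by case: Hno; exists qs, (inl j); split.
  exists q; split => //.
  case: (classic (exists t', edge A (inr q) t')) => [[[j|q'] ht']|Hn].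
  - case: Hno. exists (rcons qs q), (inl j). split => //. by rewrite pc_rcons.
  - by exists q'.
  - case: Hno. exists qs, (inr q). split => //= t' ht'. apply: Hn. by exists t'.
have [q0 [E0 _]] := Hall [::] t0 ht0. subst t0.
pose P q := exists qs, path_chain A (inl i) qs (inr q).
have step : forall x : {q | P q}, {q' | P q' /\ edge A (inr (proj1_sig x)) (inr q')}.
  move=> [q Pq] /=. apply: constructive_indefinite_description.
  case: Pq => qs Hq.
  have [q1 [[E1] [q' Hq']]] := Hall _ _ Hq. subst q1.
  exists q'. split => //. exists (rcons qs q). by rewrite pc_rcons.
pose stepx (x : {q | P q}) : {q | P q} := exist _ _ (proj1 (proj2_sig (step x))).
have x0 : P q0 by exists [::].
pose s j := proj1_sig (iter j stepx (exist _ q0 x0)).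
have hs : inf_path A i s.
  split => //. move=> j. rewrite /s /=. exact: (proj2 (proj2_sig (step _))).
case: (classic (mean_liminf_nonneg (fun j => wt (s j)))) => Hm.
  exists TEx. right. exists s. split => //. by left.
exists TAll. right. exists s. split => //. by right.
Qed.

End Gen.

Lemma PC2 {m n m' n'} (A : roMPG m n) (B : roMPG m' n') (ep : pos A -> pos B)
  (Hpp : forall q q', edge A (inr q) (inr q') -> edge B (inr (ep q)) (inr (ep q'))) :
  forall s qs x s' y, path_chain A s qs x ->
  (forall q, edge A s (inr q) -> edge B s' (inr (ep q))) ->
  (edge A s x -> edge B s' y) ->
  (forall q', edge A (inr q') x -> edge B (inr (ep q')) y) ->
  path_chain B s' (map ep qs) y.
Proof.
move=> s qs; elim: qs s => [|q qs IH] s x s' y /=.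
  move=> h _ H _. exact: H.
move=> [h1 h2] H1 _ H3. split; first exact: H1.
apply: (IH _ _ _ _ h2); [move=> q'; exact: Hpp | exact: (H3 q) | exact: H3].
Qed.

Definition catseq {X : Type} (p : seq X) (s : nat -> X) (j : nat) : X :=
  nth (s (j - size p)%N) p j.

Lemma catseq_tail {X : Type} (p : seq X) s N : catseq p s (size p + N) = s N.
Proof. by rewrite /catseq nth_default ?leq_addr // addKn. Qed.

Lemma catseq_mk {X : Type} (p : seq X) s M : mkseq (catseq p s) (size p + M) = p ++ mkseq s M.
Proof.
apply: (@eq_from_nth _ (s 0%N)).
  by rewrite size_mkseq size_cat size_mkseq.
move=> j. rewrite size_mkseq => hj. rewrite nth_mkseq // nth_cat /catseq.
case: ifP => h. exact: set_nth_default.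
rewrite nth_default; last by rewrite leqNgt h.
rewrite nth_mkseq //. rewrite ltn_subLR //. by rewrite leqNgt h.
Qed.


Definition sumw {X : Type} (w : X -> R) (qs : seq X) : R := foldr Rplus 0%R (map w qs).

Lemma sumw_cat {X} (w : X -> R) a b : sumw w (a ++ b) = (sumw w a + sumw w b)%R.
Proof. rewrite /sumw map_cat. elim: a => [|x a IH] /=; [lra | rewrite IH; lra]. Qed.

Lemma foldrR_cat (a b : seq R) : foldr Rplus 0%R (a ++ b) = (foldr Rplus 0%R a + foldr Rplus 0%R b)%R.
Proof. elim: a => [|x a IH] /=; [lra | rewrite IH; lra]. Qed.

Lemma entr_succ {m n} (A : roMPG m n) : is_roPG A -> forall i, exists t, edge A (inl i) t.
Proof. move=> [[H _] _] i. have [t [ht _]] := H i. by exists t. Qed.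

Lemma det_of {m n} (A : roMPG m n) : is_roPG A -> det A.
Proof. by move=> [_ H]. Qed.

Section Seq.
Context {m l n : nat} (C : roMPG m l) (D : roMPG l n).
Hypothesis (dC : det C) (dD : det D).
Notation CD := (roseq C D).

Lemma seq_src_inj a b : seq_src C D a = seq_src C D b -> a = b.
Proof. by case: a => [a|a]; case: b => [b|b] //= [->]. Qed.

Lemma seq_src_nD a q : seq_src C D a <> inr (inr q).
Proof. by case: a. Qed.

Ltac nD := match goal with E : _ |- _ => first [ by case: (seq_src_nD _ _ E) | by case: (seq_src_nD _ _ (esym E)) ] end.

Lemma det_seq : det CD.
Proof.
move=> s t t' h1 h2.
case: h1 => [[sc [qc [Es [Et e]]]]|[[qd [td [Es [Et e]]]]|[sc [td [j [Es [Et [e1 e2]]]]]]]]; subst s t;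
case: h2 => [[sc' [qc' [E [Et e']]]]|[[qd' [td' [E [Et e']]]]|[sc' [td' [j' [E [Et [e1' e2']]]]]]]]; subst t'.
- have := seq_src_inj _ _ E => ?; subst sc'. by have [->] := dC _ _ _ e e'.
- nD.
- have := seq_src_inj _ _ E => ?; subst sc'. by have := dC _ _ _ e e1'.
- nD.
- case: E => ?; subst qd'. by rewrite (dD _ _ _ e e').
- nD.
- have := seq_src_inj _ _ E => ?; subst sc'. by have := dC _ _ _ e1 e'.
- nD.
- have := seq_src_inj _ _ E => ?; subst sc'. have [?] := dC _ _ _ e1 e1'. subst j'.
  by rewrite (dD _ _ _ e2 e2').
Qed.

Lemma seq_pc_Cpos s qs q : path_chain C s qs (inr q) ->
  path_chain CD (seq_src C D s) (map inl qs) (inr (inl q)).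
Proof.
move=> h. apply: (PC2 C CD inl _ _ _ _ _ _ h).
- move=> a b e. left. by exists (inr a), b.
- move=> b e. left. by exists s, b.
- move=> e. left. by exists s, q.
- move=> b e. left. by exists (inr b), q.
Qed.

Lemma seq_pc_C s qs j y0 : path_chain C s qs (inl j) -> edge D (inl j) y0 ->
  path_chain CD (seq_src C D s) (map inl qs) (seq_tgt C D y0).
Proof.
move=> h hy. apply: (PC2 C CD inl _ _ _ _ _ _ h).
- move=> a b e. left. by exists (inr a), b.
- move=> b e. left. by exists s, b.
- move=> e. right; right. by exists s, y0, j.
- move=> b e. right; right. by exists (inr b), y0, j.
Qed.

Lemma seq_pc_D q qs t : path_chain D (inr q) qs t ->
  path_chain CD (inr (inr q)) (map inr qs) (seq_tgt C D t).
Proof.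
move=> h. apply: (PC2 D CD inr _ _ _ _ _ _ h).
- move=> a b e. right; left. by exists a, (inr b).
- move=> b e. right; left. by exists q, (inr b).
- move=> e. right; left. by exists q, t.
- move=> b e. right; left. by exists b, t.
Qed.

Lemma seq_concat s qs j qsD t : path_chain C s qs (inl j) -> path_chain D (inl j) qsD t ->
  path_chain CD (seq_src C D s) (map inl qs ++ map inr qsD) (seq_tgt C D t).
Proof.
case: qsD => [|qd qsD] /= h1 h2.
  rewrite cats0. exact: seq_pc_C h1 h2.
case: h2 => h2 h3. rewrite pc_cat. split.
  exact: (seq_pc_C _ _ _ (inr qd) h1 h2).
exact: seq_pc_D.
Qed.

Lemma seq_term_C q : term C (inr q) -> term CD (inr (inl q)).
Proof.
move=> T t' [[sc [qc [E [_ e]]]]|[[qd [td [E _]]]|[sc [td [j [E [_ [e _]]]]]]]].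
- have := seq_src_inj sc (inr q) (esym E) => ?; subst sc. exact: T e.
- done.
- have := seq_src_inj sc (inr q) (esym E) => ?; subst sc. exact: T e.
Qed.

Lemma seq_term_D q : term D (inr q) -> term CD (inr (inr q)).
Proof.
move=> T t' [[sc [qc [E _]]]|[[qd [td [[E] [_ e]]]]|[sc [td [j [E _]]]]]].
- nD.
- subst qd. exact: T e.
- nD.
Qed.

Lemma map_wt_inl qs : map (@wt _ _ CD) (map inl qs) = map (@wt _ _ C) qs.
Proof. by elim: qs => //= q qs ->. Qed.
Lemma map_wt_inr qs : map (@wt _ _ CD) (map inr qs) = map (@wt _ _ D) qs.
Proof. by elim: qs => //= q qs ->. Qed.

Lemma part1_i (eC : forall i, exists t, edge C (inl i) t) (eD : forall i, exists t, edge D (inl i) t) i :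
  Wmp CD i = Scomp (Wmp C) (Wmp D) i.
Proof.
have [dc WC] := W_exists C i (eC i).
apply: Wmp_eq; first exact: det_seq.
rewrite /Scomp (Wmp_eq C dC _ _ WC).
case: WC => [[qs [t [[hp T] ->]]]|[s [hs cC]]].
- case: t hp T => [j|q] hp T.
  + have [dd WD] := W_exists D j (eD j).
    case: (WD) => [[qsD [tD [[hpD TD] Edd]]]|[s [hs cD]]].
    * left. exists (map inl qs ++ map inr qsD), (seq_tgt C D tD). split.
        split; first exact: (seq_concat (inl i) _ _ _ _ hp hpD).
        case: tD hpD TD {Edd} => [k|q] hpD TD //=. exact: seq_term_D.
      case: qs {hp} => [|q0 qs] /=; rewrite (Wmp_eq D dD _ _ WD) Edd;
      case: tD {hpD TD Edd} => [k|q] /=; rewrite ?map_cat ?map_wt_inl ?map_wt_inr.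
      - by case: qsD.
      - by case: (role q).
      - case: qsD => [|q1 qsD] /=. by rewrite cats0.
        congr TW. rewrite foldrR_cat /=. lra.
      - by case: (role q).
    * right. pose K := size (map (@inl (pos C) (pos D)) qs).
      pose s' := catseq (map (@inl (pos C) (pos D)) qs) (fun j => inr (s j)).
      have Hm : mean_liminf_nonneg (fun j => @wt _ _ CD (s' j)) <-> mean_liminf_nonneg (fun j => wt (s j)).
        rewrite !mean_RC; split; [apply: (RC_shift _ _ K 0%N) | apply: (RC_shift _ _ 0%N K)];
        move=> x; by rewrite /s' /K ?addn0 (addnC x) catseq_tail.
      exists s'. split.
        apply: (inf_of_prefix _ _ _ K) => N hN. rewrite -(subnKC hN) /s' /K catseq_mk catseq_tail.
        have -> : mkseq (fun j => @inr (pos C) (pos D) (s j)) (N - K) = map inr (mkseq s (N - K)).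
          by rewrite /mkseq -map_comp.
        exact: (seq_concat (inl i) _ _ _ _ hp (inf_prefix D _ _ hs _)).
      clearbody s'. case: qs {hp K} => [|q0 qs] /=; rewrite (Wmp_eq D dD _ _ WD);
      case: cD => [[c ->]|[c ->]]; [left|right|left|right]; (split; [by rewrite Hm | done]).
  + left. exists (map inl qs), (inr (inl q)). split.
      split; [exact: (seq_pc_Cpos (inl i) _ _ hp) | exact: seq_term_C].
    by rewrite /=; case: (role q).
- right. exists (fun j => inl (s j)). split.
    case: hs => h0 hS. split.
      left. by exists (inl i), (s 0%N).
    move=> j. left. by exists (inr (s j)), (s j.+1).
  by case: cC => [[c ->]|[c ->]]; [left|right].
Qed.

End Seq.


Section Embed.
Context {m n m' n' : nat} (A : roMPG m n) (B : roMPG m' n').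
Variables (ei : 'I_m -> 'I_m') (eo : 'I_n -> 'I_n') (ep : pos A -> pos B).
Definition emb_s (s : 'I_m + pos A) : 'I_m' + pos B :=
  match s with inl i => inl (ei i) | inr q => inr (ep q) end.
Definition emb_t (t : 'I_n + pos A) : 'I_n' + pos B :=
  match t with inl i => inl (eo i) | inr q => inr (ep q) end.
Hypothesis Hs : forall s t, edge A s t -> edge B (emb_s s) (emb_t t).
Hypothesis Hterm : forall q t', edge B (inr (ep q)) t' -> exists t, edge A (inr q) t.
Hypothesis Hrole : forall q, role (ep q) = role q.
Hypothesis Hwt : forall q, wt (ep q) = wt q.

Lemma W_embed i d : W_den A i d -> W_den B (ei i) (Tmap eo d).
Proof.
case=> [[qs [t [[hp T] ->]]]|[s [[h0 hS] c]]].
- left. exists (map ep qs), (emb_t t). split. split.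
    apply: (PC2 A B ep _ _ _ _ _ _ hp).
    + move=> a b e. exact: (Hs _ _ e).
    + move=> b e. exact: (Hs _ _ e).
    + move=> e. exact: (Hs _ _ e).
    + move=> b e. exact: (Hs _ _ e).
    case: t {hp} T => [j|q] T //= t' e. have [t0 e0] := Hterm _ _ e. exact: T _ e0.
  case: t {hp T} => [j|q] /=.
    case: qs => [|q0 qs] //=. rewrite Hwt. congr (TW (_ + _)%R). by elim: qs => //= q1 qs ->; rewrite Hwt.
  by rewrite Hrole; case: (role q).
- right. exists (fun j => ep (s j)). split.
    split; [exact: (Hs _ _ h0) | move=> j; exact: (Hs _ _ (hS j))].
  have -> : (fun j => wt (ep (s j))) = (fun j => wt (s j)).
    apply: functional_extensionality => j. exact: Hwt.
  by case: c => [[c ->]|[c ->]]; [left|right].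
Qed.
End Embed.

Section Sum.
Context {m1 n1 m2 n2 : nat} (C : roMPG m1 n1) (D : roMPG m2 n2).
Hypothesis (dC : det C) (dD : det D).
Notation CD := (rosum C D).

Lemma lr_neq k1 k2 (a : 'I_k1) (b : 'I_k2) : lshift k2 a <> rshift k1 b.
Proof. move=> E. have := eq_lrshift a b. by rewrite E eqxx. Qed.

Lemma ord_add_neq k (a : 'I_k) b : nat_of_ord a = (k + b)%N -> False.
Proof. move=> E. have := ltn_ord a. by rewrite E ltnNge leq_addr. Qed.

Lemma det_sum : det CD.
Proof.
move=> s t t' [[sc [tc [e [Es Et]]]]|[sd [td [e [Es Et]]]]];
  move=> [[sc' [tc' [e' [Es' Et']]]]|[sd' [td' [e' [Es' Et']]]]]; subst s t t'.
- have E : sc = sc'.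
    case: sc sc' Es' {e e'} => [a|a] [b|b] //=; [by move=> [/ord_inj ->] | by case=> ->].
  subst sc'. by have -> := dC _ _ _ e e'.
- by case: sc sd' Es' {e e'} => [a|a] [b|b] //= [] /ord_add_neq.
- by case: sd sc' Es' {e e'} => [a|a] [b|b] //= [] /esym /ord_add_neq.
- have E : sd = sd'.
    case: sd sd' Es' {e e'} => [a|a] [b|b] //=; [by move=> [/addnI /ord_inj ->] | by case=> ->].
  subst sd'. by have -> := dD _ _ _ e e'.
Qed.

Lemma part2_i (eC : forall i, exists t, edge C (inl i) t) (eD : forall i, exists t, edge D (inl i) t) i :
  Wmp CD i = Ssum (Wmp C) (Wmp D) i.
Proof.
rewrite /Ssum -{1}(splitK i). case: (split i) => [a|b] /=.
- have [d W] := W_exists C a (eC a). rewrite (Wmp_eq C dC _ _ W).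
  apply: Wmp_eq; first exact: det_sum.
  apply: (W_embed C CD _ _ (fun q => inl q)) => //.
  + move=> s t e. left. exists s, t. split; [exact: e | clear e; by case: s; case: t].
  + move=> q t' [[sc [tc [e [Es Et]]]]|[sd [td [e [Es Et]]]]].
    * case: sc Es e => [x|x] //= [<-] e. by exists tc.
    * by case: sd Es {e}.
- have [d W] := W_exists D b (eD b). rewrite (Wmp_eq D dD _ _ W).
  apply: Wmp_eq; first exact: det_sum.
  apply: (W_embed D CD _ _ (fun q => inr q)) => //.
  + move=> s t e. right. exists s, t. split; [exact: e | clear e; by case: s; case: t].
  + move=> q t' [[sc [tc [e [Es Et]]]]|[sd [td [e [Es Et]]]]].
    * by case: sc Es {e}.
    * case: sd Es e => [x|x] //= [<-] e. by exists td.
Qed.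
End Sum.


Lemma inl_inj' {A B : Type} {a b : A} : @inl A B a = inl b -> a = b.
Proof. by case. Qed.
Lemma inr_inj' {A B : Type} {a b : B} : @inr A B a = inr b -> a = b.
Proof. by case. Qed.

Lemma lr_neq' k1 k2 (a : 'I_k1) (b : 'I_k2) : lshift k2 a <> rshift k1 b.
Proof. move=> E. have := eq_lrshift a b. by rewrite E eqxx. Qed.

Lemma split_lshift' a b (k : 'I_a) : split (lshift b k) = inl k.
Proof. exact: (unsplitK (inl k)). Qed.
Lemma split_rshift' a b (k : 'I_b) : split (rshift a k) = inr k.
Proof. exact: (unsplitK (inr k)). Qed.

Lemma split_inl a b (x : 'I_(a + b)) k : split x = inl k -> x = lshift b k.
Proof. move=> E. by rewrite -(splitK x) E. Qed.
Lemma split_inr a b (x : 'I_(a + b)) k : split x = inr k -> x = rshift a k.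
Proof. move=> E. by rewrite -(splitK x) E. Qed.

Section Trace.
Context {l m n : nat} (E : roMPG (l + m) (l + n)).
Notation RE := (rotrace E).

Definition lift_s (s : 'I_m + pos E) : 'I_(l + m) + pos E :=
  match s with inl i => inl (rshift l i) | inr q => inr q end.
Definition lift_t (t : 'I_n + pos E) : 'I_(l + n) + pos E :=
  match t with inl i => inl (rshift l i) | inr q => inr q end.

Fixpoint xchain (s : 'I_(l + m) + pos E) (qs : seq (pos E)) (t : 'I_(l + n) + pos E) : Prop :=
  match qs with
  | [::] => exists ks, tr_chain E s ks t
  | q :: qs' => (exists ks, tr_chain E s ks (inr q)) /\ xchain (inr q) qs' t
  end.

Lemma pc_rot s qs t : path_chain RE s qs t <-> xchain (lift_s s) qs (lift_t t).
Proof.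
elim: qs s => [|q qs IH] s /=; first by [].
rewrite IH. by [].
Qed.

Lemma xc_of_pc s qs t : path_chain E s qs t -> xchain s qs t.
Proof.
elim: qs s => [|q qs IH] s /=; first by move=> h; exists [::].
move=> [h1 h2]. split; [by exists [::] | exact: IH].
Qed.

Lemma tr_app s ks k ks' t : tr_chain E s ks (inl (lshift n k)) ->
  tr_chain E (inl (lshift m k)) ks' t -> tr_chain E s (rcons ks k ++ ks') t.
Proof.
elim: ks s => [|k0 ks IH] s /=; first by move=> h1 h2; split.
move=> [h1 h2] h3. split => //. exact: IH.
Qed.

Lemma xc_app s qs k qs' t : xchain s qs (inl (lshift n k)) ->
  xchain (inl (lshift m k)) qs' t -> xchain s (qs ++ qs') t.
Proof.
elim: qs s => [|q qs IH] s /=.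
  move=> [ks h]. case: qs' => [|q' qs'] /=.
    move=> [ks' h']. exists (rcons ks k ++ ks'). exact: tr_app.
  move=> [[ks' h'] h2]. split => //. exists (rcons ks k ++ ks'). exact: tr_app.
move=> [h1 h2] h3. split => //. exact: IH.
Qed.

Lemma xc_pre s p1 q p2 t : xchain s (p1 ++ q :: p2) t -> xchain s p1 (inr q).
Proof. elim: p1 s => [|q1 p1 IH] s /=; [by case | move=> [h1 h2]; split => //; exact: IH]. Qed.

Lemma tr_first s ks t : tr_chain E s ks t -> exists t0, edge E s t0.
Proof. case: ks => [|k ks] /=; [by exists t | move=> [h _]; exact: (ex_intro _ _ h)]. Qed.

Definition noL (t : 'I_(l + n) + pos E) := forall k, t <> inl (lshift n k).

Lemma noL_lift t : noL (lift_t t).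
Proof. case: t => [j|q] k //= E0. exact: (lr_neq' _ _ k j (esym (inl_inj' E0))). Qed.

Lemma tr_chain_det (dE : det E) s ks ks' t t' :
  tr_chain E s ks t -> tr_chain E s ks' t' -> noL t -> noL t' -> t = t'.
Proof.
elim: ks s ks' => [|k ks IH] s [|k' ks'] /=.
- move=> h h' _ _. exact: dE h h'.
- move=> h [h' _] N _. case: (N k'). exact: dE h h'.
- move=> [h _] h' _ N. case: (N k). exact: dE h' h.
- move=> [h1 h2] [h1' h2'] N N'.
  have := dE _ _ _ h1 h1' => /inl_inj' /lshift_inj Ek. subst k'.
  exact: IH h2 h2' N N'.
Qed.

Lemma lift_t_inj : injective lift_t.
Proof. case=> [a|a] [b|b] //= => [/inl_inj' /rshift_inj ->|/inr_inj' ->] //. Qed.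

Lemma det_tr (dE : det E) : det RE.
Proof.
move=> s t t' [ks h] [ks' h']. apply: lift_t_inj.
exact: (tr_chain_det dE _ _ _ _ _ h h' (noL_lift _) (noL_lift _)).
Qed.

End Trace.


Definition nextk {l n} (v : T 'I_(l + n)) : option 'I_l :=
  match v with
  | TExit x | TW _ x => match split x with inl k => Some k | inr _ => None end
  | _ => None
  end.

Lemma enum_uniq (P : nat -> Prop) (p1 p2 : nat -> nat) :
  (forall t, p1 t < p1 t.+1)%N -> (forall t, p2 t < p2 t.+1)%N ->
  (forall j, P j <-> exists t, p1 t = j) -> (forall j, P j <-> exists t, p2 t = j) ->
  forall t, p1 t = p2 t.
Proof.
move=> h1 h2 H1 H2.
have mono : forall p : nat -> nat, (forall t, p t < p t.+1)%N -> forall a b, (a < b)%N -> (p a < p b)%N.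
  move=> p hp a b; elim: b => [//|b IH]. rewrite ltnS leq_eqVlt => /orP [/eqP ->|hab] //.
  exact: ltn_trans (IH hab) (hp b).
have key : forall p q : nat -> nat, (forall t, p t < p t.+1)%N -> (forall t, q t < q t.+1)%N ->
    (forall j, (exists t, p t = j) -> exists t, q t = j) ->
    forall t, (forall t', (t' < t)%N -> p t' = q t') -> (q t <= p t)%N.
  move=> p q hp hq Hpq t IH.
  have [t2 E2] := Hpq (p t) (ex_intro _ t erefl).
  case: (ltnP t2 t) => h.
    have := mono p hp _ _ h. by rewrite (IH _ h) E2 ltnn.
  rewrite -E2. case: (ltngtP t2 t) h => // [h _|-> _] //. exact: ltnW (mono q hq _ _ h).
elim/ltn_ind => t IH. apply/eqP; rewrite eqn_leq; apply/andP; split.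
  apply: (key p2 p1 h2 h1) => [j [t0 E0]|t' ht']; first by apply/H1; apply/H2; exists t0.
  by rewrite IH.
apply: (key p1 p2 h1 h2) => [j [t0 E0]|t' ht']; first by apply/H2; apply/H1; exists t0.
by rewrite IH.
Qed.

Section SUniq.
Context {l m n : nat} (f : 'I_(l + m) -> T 'I_(l + n)) (i : 'I_m).
Notation u := (tr_seq f i).

Lemma tr_next_nk v : tr_next f v = match nextk v with Some k => Some (f (lshift m k)) | None => None end.
Proof. by case: v => [x|r x||] //=; case: (split x). Qed.

Lemma u_none_le j j' : u j = None -> (j <= j')%N -> u j' = None.
Proof.
move=> h. elim: j' => [|j' IH]; first by rewrite leqn0 => /eqP <-.
rewrite leq_eqVlt => /orP [/eqP <-|] //. rewrite ltnS => /IH /= ->. done.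
Qed.

Definition term_at K := exists v, u K = Some v /\ nextk v = None.

Lemma term_next K : term_at K -> u K.+1 = None.
Proof. move=> [v [h1 h2]] /=. by rewrite h1 tr_next_nk h2. Qed.

Lemma term_unique K1 K2 : term_at K1 -> term_at K2 -> K1 = K2.
Proof.
move=> h1 h2. case: (ltngtP K1 K2) => // h.
- have := u_none_le _ _ (term_next _ h1) h. case: h2 => v [-> _]. done.
- have := u_none_le _ _ (term_next _ h2) h. case: h1 => v [-> _]. done.
Qed.

Definition Ssum' K := sum_f_R0 (fun j => weight_of (u j)) K.

Definition FinVal K (v : T 'I_(l + n)) (d : T 'I_n) :=
  (v = TEx /\ d = TEx) \/ (v = TAll /\ d = TAll) \/
  (exists x k, v = TExit x /\ split x = inr k /\
     (((forall j, (j < K)%N -> ~ is_wl (u j)) /\ d = TExit k) \/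
      ((exists j, (j < K)%N /\ is_wl (u j)) /\ d = TW (Ssum' K) k))) \/
  (exists r x k, v = TW r x /\ split x = inr k /\ d = TW (Ssum' K) k).

Definition InfVal (d : T 'I_n) :=
  (forall j, u j <> None) /\
   exists phi : nat -> nat,
     (forall t, (phi t < phi (S t))%nat) /\
     (forall j, is_wl (u j) <-> exists t, phi t = j) /\
     ((mean_liminf_nonneg (fun t => weight_of (u (phi t))) /\ d = TEx) \/
      (~ mean_liminf_nonneg (fun t => weight_of (u (phi t))) /\ d = TAll)).

Lemma Sden_cases d : Strace_den f i d ->
  (exists K v, u K = Some v /\ nextk v = None /\ FinVal K v d) \/ InfVal d.
Proof.
case=> [[K [h ->]]|[[K [h ->]]|[[K [x [k [h [hs hd]]]]]|[[K [r [x [k [h [hs ->]]]]]]|hI]]]].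
- left; exists K, TEx; split => //; split => //; by left.
- left; exists K, TAll; split => //; split => //; right; by left.
- left; exists K, (TExit x); split => //; split; first by rewrite /= hs.
  right; right; left. by exists x, k.
- left; exists K, (TW r x); split => //; split; first by rewrite /= hs.
  right; right; right. by exists r, x, k.
- by right.
Qed.

Lemma FinVal_uniq K v d1 d2 : FinVal K v d1 -> FinVal K v d2 -> d1 = d2.
Proof.
move=> F1 F2.
case: F1 => [[E1 ->]|[[E1 ->]|[[x [k [E1 [hs hd]]]]|[r [x [k [E1 [hs ->]]]]]]]]; subst v;
case: F2 => [[E2 ->]|[[E2 ->]|[[x' [k' [E2 [hs' hd']]]]|[r' [x' [k' [E2 [hs' ->]]]]]]]]; try discriminate => //.
- done.
- done.
- case: E2 => E2; subst x'. rewrite hs in hs'. case: hs' => E3; subst k'.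
  case: hd => [[a ->]|[[j [hj hw]] ->]]; case: hd' => [[a' ->]|[[j' [hj' hw']] ->]] //.
  + by case: (a _ hj').
  + by case: (a' _ hj).
- case: E2 => E2 E3; subst x' r'. rewrite hs in hs'. by case: hs' => ->.
Qed.

Lemma Strace_uniq d1 d2 : Strace_den f i d1 -> Strace_den f i d2 -> d1 = d2.
Proof.
move=> /Sden_cases [[K1 [v1 [h1 [n1 F1]]]]|[NN1 [p1 [m1 [e1 c1]]]]]
       /Sden_cases [[K2 [v2 [h2 [n2 F2]]]]|[NN2 [p2 [m2 [e2 c2]]]]].
- have E := term_unique K1 K2 (ex_intro _ v1 (conj h1 n1)) (ex_intro _ v2 (conj h2 n2)).
  subst K2. rewrite h1 in h2. case: h2 => E; subst v2. exact: FinVal_uniq F1 F2.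
- by case: (NN2 _ (term_next _ (ex_intro _ v1 (conj h1 n1)))).
- by case: (NN1 _ (term_next _ (ex_intro _ v2 (conj h2 n2)))).
- have Ep := enum_uniq _ _ _ m1 m2 e1 e2.
  have EE : (fun t => weight_of (u (p1 t))) = (fun t => weight_of (u (p2 t))).
    apply: functional_extensionality => t. by rewrite Ep.
  rewrite EE in c1.
  by case: c1 => [[a ->]|[a ->]]; case: c2 => [[b ->]|[b ->]].
Qed.

Lemma Strace_eq d : Strace_den f i d -> Strace f i = d.
Proof.
move=> H. have := epsilon_spec (inhabits TEx) (Strace_den f i) (ex_intro _ d H).
rewrite -/(Strace f i) => H'. exact: Strace_uniq H' H.
Qed.

End SUniq.


Lemma minimal (P : nat -> Prop) : (exists k, P k) -> exists k, P k /\ forall j, (j < k)%N -> ~ P j.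
Proof.
move=> [k1 H0]. apply: NNPP => Hno.
have H : forall k j, (j <= k)%N -> ~ P j.
  elim=> [|k IH] j hj.
- move: hj; rewrite leqn0 => /eqP -> H. apply: Hno. exists 0%N. split => //.
- move: hj; rewrite leq_eqVlt => /orP [/eqP -> H|hj].
  + apply: Hno. exists k.+1. split => // j' hj'. apply: IH. by rewrite -ltnS.
exact (H k1 k1 (leqnn k1) H0).
Qed.

Lemma nk_fin {l n} {E' : roMPG (l + n) (l + n)} : True. Proof. done. Qed.

Section TraceMain.
Context {l m n : nat} (E : roMPG (l + m) (l + n)).
Hypothesis HE : is_roPG E.
Variable i : 'I_m.
Notation RE := (rotrace E).
Notation f := (Wmp E).
Notation u := (tr_seq (Wmp E) i).

Let dE := det_of E HE.
Let eE := entr_succ E HE.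

Lemma WE e : W_den E e (f e).
Proof. have [d W] := W_exists E e (eE e). by rewrite (Wmp_eq E dE _ _ W). Qed.

Lemma nkfin qs (x : 'I_(l + n)) :
  nextk (fin_den E qs (inl x)) = match split x with inl k => Some k | inr _ => None end.
Proof. by case: qs. Qed.

Definition seg e := epsilon (inhabits [::])
  (fun qs => exists x, path_chain E (inl e) qs (inl x) /\ f e = fin_den E qs (inl x)).

Lemma seg_spec e k : nextk (f e) = Some k ->
  path_chain E (inl e) (seg e) (inl (lshift n k)) /\ f e = fin_den E (seg e) (inl (lshift n k)).
Proof.
move=> hk.
have Ex : exists qs x, path_chain E (inl e) qs (inl x) /\ f e = fin_den E qs (inl x).
  case: (WE e) hk => [[qs [t [[hp T] Ef]]]|[s [hs [[_ ->]|[_ ->]]]]] //.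
  case: t hp T Ef => [x|q] hp T Ef.
    by exists qs, x.
  by rewrite Ef /=; case: (role q).
have [x [hp Ef]] := epsilon_spec (inhabits [::]) _ Ex.
rewrite -/(seg e) in hp Ef.
move: hk. rewrite Ef nkfin. case Hx: (split x) => [k'|//] [<-].
by rewrite -(split_inl _ _ _ _ Hx).
Qed.

Fixpoint ent (K : nat) : 'I_(l + m) :=
  match K with
  | 0 => rshift l i
  | K'.+1 => match nextk (f (ent K')) with Some k => lshift m k | None => ent K' end
  end.

Definition Cont K := forall j, (j < K)%N -> nextk (f (ent j)) <> None.

Lemma Cont_S K : Cont K.+1 -> Cont K.
Proof. move=> H j hj. apply: H. exact: ltnW. Qed.

Lemma u_ent K : Cont K -> u K = Some (f (ent K)).
Proof.
elim: K => [//|K IH] H /=. rewrite IH; last exact: Cont_S.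
rewrite tr_next_nk. have := H K (ltnSn K). by case: (nextk (f (ent K))).
Qed.

Definition Qs K := flatten [seq seg (ent j) | j <- iota 0 K].

Lemma Qs_S K : Qs K.+1 = Qs K ++ seg (ent K).
Proof. by rewrite /Qs -addn1 iotaD map_cat flatten_cat /= cats0. Qed.

Lemma reach K : Cont K -> forall qs t, xchain E (inl (ent K)) qs t ->
  xchain E (inl (rshift l i)) (Qs K ++ qs) t.
Proof.
elim: K => [|K IH] H qs t h //=.
have hK := H K (ltnSn K). case Hk: (nextk (f (ent K))) hK => [k|//] _.
have [hp _] := seg_spec _ _ Hk.
move: h => /=. rewrite Hk => h.
rewrite Qs_S -catA. apply: IH; first exact: Cont_S.
exact: xc_app (xc_of_pc _ _ _ _ hp) h.
Qed.

Lemma weight_seg e k : nextk (f e) = Some k -> weight_of (Some (f e)) = sumw wt (seg e).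
Proof. move=> /seg_spec [_ ->]. by case: (seg e). Qed.

Lemma wl_seg e k : nextk (f e) = Some k -> (is_wl (Some (f e)) <-> seg e <> [::]).
Proof.
move=> hk. have [_ Ef] := seg_spec _ _ hk. rewrite Ef.
case: (seg e) => [|q qs] /=; split => //.
- by move=> [r [x [k0 [E0 _]]]].
- move=> _. exists (foldr Rplus 0%R [seq wt i0 | i0 <- q :: qs]), (lshift n k), k.
  split => //. exact: split_lshift'.
Qed.

Lemma Cont_nk K j : Cont K -> (j < K)%N -> exists k, nextk (f (ent j)) = Some k.
Proof. move=> H hj. have := H j hj. case: (nextk _) => [k|//] _. by exists k. Qed.

Lemma psum_u K : Cont K -> psum (fun j => weight_of (u j)) K = sumw wt (Qs K).
Proof.
elim: K => [|K IH] H; first by [].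
rewrite /= IH; last exact: Cont_S.
have [k hk] := Cont_nk _ _ H (ltnSn K).
rewrite (u_ent K (Cont_S _ H)) (weight_seg _ _ hk) Qs_S sumw_cat. done.
Qed.

Lemma wl_u K j : Cont K -> (j < K)%N -> (is_wl (u j) <-> seg (ent j) <> [::]).
Proof.
move=> H hj. have [k hk] := Cont_nk _ _ H hj.
have Hj : Cont j. move=> j' hj'. apply: H. exact: ltn_trans hj' hj.
rewrite (u_ent _ Hj). exact: wl_seg hk.
Qed.

Lemma Qs_nil K : Cont K -> (Qs K = [::] <-> forall j, (j < K)%N -> ~ is_wl (u j)).
Proof.
elim: K => [|K IH] H; first by split.
rewrite Qs_S. have IH' := IH (Cont_S _ H).
split.
  case: (Qs K) IH' => [|//] IH' /= hs j. rewrite ltnS leq_eqVlt => /orP [/eqP ->|hj].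
    move=> hw. have := (wl_u K.+1 K H (ltnSn K)).1 hw. by rewrite hs.
  by apply IH'.
move=> Hw. have -> : Qs K = [::]. apply/IH' => j hj. apply: Hw. exact: ltnW.
rewrite /=. apply: NNPP => hne. apply: (Hw K (ltnSn K)). by apply/(wl_u K.+1).
Qed.


Lemma sumf_u K : Cont K -> sum_f_R0 (fun j => weight_of (u j)) K =
  (sumw wt (Qs K) + weight_of (Some (f (ent K))))%R.
Proof. move=> H. by rewrite sum_f_psum /= psum_u // u_ent. Qed.

Lemma caseA K : Cont K -> nextk (f (ent K)) = None -> Strace f i = Wmp RE i.
Proof.
move=> Hc hK. have hu := u_ent K Hc. have Hr := reach K Hc.
have dR := det_tr E dE.
case: (WE (ent K)) => [[qsE [tE [[hp T] Ef]]]|[s [hs c]]].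
- case: tE hp T Ef => [x|q] hp T Ef.
  + case Hx: (split x) => [k0|k].
      by move: hK; rewrite Ef nkfin Hx.
    have Ex := split_inr _ _ _ _ Hx. subst x.
    have HP : path_chain RE (inl i) (Qs K ++ qsE) (inl k).
      apply/pc_rot. apply: Hr. exact: xc_of_pc.
    rewrite (Strace_eq _ _ (fin_den RE (Qs K ++ qsE) (inl k))).
      symmetry. apply: Wmp_eq => //. left. by exists (Qs K ++ qsE), (inl k).
    right; right. rewrite /Ssum' in Ef.
    case: qsE {hp HP} Ef => [|q0 qs0] Ef.
    * left. exists K, (rshift l k), k. rewrite hu Ef. split => //. split; first exact: split_rshift'.
      case E0: (Qs K) => [|q1 qs1].
        left. split => //. by apply/(Qs_nil K Hc).
      right. split.
        apply: NNPP => Hn. have : Qs K = [::].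
          apply/(Qs_nil K Hc) => j hj hw. apply: Hn. by exists j.
        by rewrite E0.
      rewrite (sumf_u K Hc) Ef E0 /=. congr TW. rewrite /sumw cats0 /=. lra.
    * right; left. exists K, (foldr Rplus 0%R [seq wt i0 | i0 <- q0 :: qs0]), (rshift l k), k.
      rewrite hu Ef. split => //. split; first exact: split_rshift'.
      rewrite (sumf_u K Hc) Ef /=. case: (Qs K) => [|q1 qs1] /=.
        congr TW. rewrite /sumw /=. lra.
      congr TW. rewrite map_cat foldrR_cat /sumw /=. lra.
  + have HP : path_chain RE (inl i) (Qs K ++ qsE) (inr q).
      apply/pc_rot. apply: Hr. exact: xc_of_pc.
    have TR : forall t', ~ edge RE (inr q) t'.
      move=> t' [ks h]. have [t0 e0] := tr_first E _ _ _ h. exact: T t0 e0.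
    rewrite (Strace_eq _ _ (fin_den RE (Qs K ++ qsE) (inr q))).
      symmetry. apply: Wmp_eq => //. left. by exists (Qs K ++ qsE), (inr q).
    move: Ef => /=. case: (role q) => Ef.
    * right; left. exists K. by rewrite hu Ef.
    * left. exists K. by rewrite hu Ef.
- have [s' [Hs' Hm]] : exists s' : nat -> pos E, inf_path RE i s' /\
     (mean_liminf_nonneg (fun j => @wt _ _ RE (s' j)) <-> mean_liminf_nonneg (fun j => wt (s j))).
    exists (catseq (Qs K) s). split.
      apply: (inf_of_prefix _ _ _ (size (Qs K))) => N hN. rewrite -(subnKC hN) catseq_mk catseq_tail.
      apply/pc_rot. apply: Hr. apply: xc_of_pc. exact: inf_prefix.
    rewrite !mean_RC; split; [apply: (RC_shift _ _ (size (Qs K)) 0%N) | apply: (RC_shift _ _ 0%N (size (Qs K)))];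
    move=> x; by rewrite ?addn0 (addnC x) catseq_tail.
  case: c => [[c Ed]|[c Ed]].
  + rewrite (Strace_eq _ _ TEx); last by left; exists K; rewrite hu Ed.
    symmetry. apply: Wmp_eq => //. right. exists s'. split => //. left. by rewrite Hm.
  + rewrite (Strace_eq _ _ TAll); last by right; left; exists K; rewrite hu Ed.
    symmetry. apply: Wmp_eq => //. right. exists s'. split => //. right. by rewrite Hm.
Qed.

End TraceMain.


Lemma pc_uniq {m n} (A : roMPG m n) (Hd : det A) s qs x :
  path_chain A s qs (inl x) -> uniq qs.
Proof.
elim: qs s => [|q qs IH] s //= [h1 h2].
rewrite (IH _ h2) andbT. apply/negP => hq.
case/path.splitPr: hq h2 => p1 p2 h2.
have [_ h3] := (pc_cat _ _ _ _ _ _).1 h2.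
have [E _] := pc_term A Hd _ _ _ _ _ h2 I h3 I.
have := congr1 size E. rewrite size_cat /= => E'.
have : (size p2 < size p1 + (size p2).+1)%N by rewrite addnS ltnS leq_addl.
by rewrite E' ltnn.
Qed.

Lemma uniq_size {T : finType} (s : seq T) : uniq s -> (size s <= #|T|)%N.
Proof. move=> hu. rewrite -(card_uniqP hu). exact: max_card. Qed.

Lemma sumw_ge0 {X} (g : X -> R) s : (forall x, 0 <= g x)%R -> (0 <= sumw g s)%R.
Proof. move=> H. elim: s => [|x s IH]; rewrite /sumw /=; [lra | rewrite /sumw in IH; have := H x; lra]. Qed.

Lemma fin_bound {X : finType} (g : X -> R) : exists B, forall x, (Rabs (g x) <= B)%R.
Proof.
exists (sumw (fun x => Rabs (g x)) (enum X)) => x.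
have : x \in enum X by rewrite mem_enum.
elim: (enum X) => [//|y s IH]. rewrite in_cons => /orP [/eqP ->|hx].
  rewrite /sumw /=. have := sumw_ge0 (fun x => Rabs (g x)) s (fun x => Rabs_pos _). rewrite /sumw. lra.
have := IH hx. rewrite /sumw /=. have := Rabs_pos (g y). lra.
Qed.

Lemma nth_pre {X} (q0 : X) p r j : (j < size p)%N -> nth q0 (p ++ r) j = nth q0 p j.
Proof. move=> h. by rewrite nth_cat h. Qed.

Lemma psum_nth {X} (q0 : X) (g : X -> R) p :
  psum (fun j => g (nth q0 p j)) (size p) = sumw g p.
Proof.
elim: p => [//|x p IH].
have -> : size (x :: p) = (1 + size p)%N by [].
rewrite psum_shift. move: IH; rewrite /sumw /= => <-.
rewrite (psum_ext _ (fun j => g (nth q0 p j))); first lra.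
move=> j _. by rewrite addn1.
Qed.

Section CaseB.
Context {l m n : nat} (E : roMPG (l + m) (l + n)).
Hypothesis HE : is_roPG E.
Variable i : 'I_m.
Notation RE := (rotrace E).
Notation f := (Wmp E).
Notation u := (tr_seq (Wmp E) i).
Notation ent := (ent E i).
Notation seg := (seg E).
Notation Qs := (Qs E i).
Let dE := det_of E HE.

Hypothesis HB : forall K, nextk (f (ent K)) <> None.

Lemma ContB K : Cont E i K.
Proof. move=> j _. exact: HB. Qed.

Lemma nkB K : exists k, nextk (f (ent K)) = Some k.
Proof. have := HB K. case: (nextk _) => [k|//] _. by exists k. Qed.

Lemma entS K k : nextk (f (ent K)) = Some k -> ent K.+1 = lshift m k.
Proof. move=> h /=. by rewrite h. Qed.

Lemma exit_inj (x : 'I_(l + n)) s s' : edge E s (inl x) -> edge E s' (inl x) -> s = s'.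
Proof. case: HE => [[_ H] _]. exact: H. Qed.

Lemma inf_nonempty N : exists j, (N <= j)%N /\ seg (ent j) <> [::].
Proof.
apply: NNPP => Hno.
have Hall : exists K0, forall j, (K0 <= j)%N -> seg (ent j) = [::].
  exists N => j hj. apply: NNPP => hne. apply: Hno. by exists j.
have [K0 [HK0 Hmin]] := minimal _ Hall.
have Hedge : forall j, (K0 <= j)%N -> exists k, ent j.+1 = lshift m k /\
    edge E (inl (ent j)) (inl (lshift n k)).
  move=> j hj. have [k hk] := nkB j. exists k. split; first exact: entS.
  have [hp _] := seg_spec E HE _ _ hk. by rewrite (HK0 j hj) in hp.
have inj : forall a, (K0 <= a)%N -> forall b, (a < b)%N -> ent a <> ent b.
  elim=> [|a IH] ha [//|b] hab Eab.
  - move: ha; rewrite leqn0 => /eqP H0. subst K0.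
    have [k [Eb _]] := Hedge b (leq0n b). rewrite Eb /= in Eab.
    exact: (lr_neq' _ _ k i (esym Eab)).
  - have [k [Eb eb]] := Hedge b (leq_trans ha hab).
    case: (ltngtP K0 a.+1) ha => // [hK0|EK0] _.
    + have [k' [Ea ea]] := Hedge a hK0. rewrite Ea Eb in Eab.
      have Ek := lshift_inj Eab. subst k'.
      have := exit_inj _ _ _ ea eb => /inl_inj' Eab'.
      exact: IH hK0 b hab Eab'.
    + subst K0.
      have hne : seg (ent a) <> [::].
        move=> hnil. apply: (Hmin a (ltnSn a)) => j. rewrite leq_eqVlt => /orP [/eqP <-|hj] //.
        exact: HK0.
      have [k' hk'] := nkB a.
      have [hp _] := seg_spec E HE _ _ hk'.
      rewrite (entS _ _ hk') Eb in Eab. have Ek := lshift_inj Eab. subst k'.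
      case/lastP: (seg (ent a)) hne hp => [//|p q] _ hp.
      have [_ eq'] := (pc_rcons _ _ _ _ _).1 hp.
      by have := exit_inj _ _ _ eq' eb.
pose g (j : 'I_(l + m).+1) := ent (K0 + j).
have ginj : injective g.
  move=> x y Exy. apply/eqP; apply: negbNE; apply/negP => Hxy.
  case: (ltngtP x y) => [h|h|h]; last by move: Hxy; rewrite (val_inj h) eqxx.
  + apply: (inj (K0 + x) (leq_addr _ _) (K0 + y)); by [rewrite ltn_add2l | exact: Exy].
  + apply: (inj (K0 + y) (leq_addr _ _) (K0 + x)); [by rewrite ltn_add2l | exact: (esym Exy)].
have := leq_card g ginj. by rewrite !card_ord ltnn.
Qed.

End CaseB.


Section Enum.
Variable P : nat -> Prop.
Hypothesis Hinf : forall N, exists j, (N <= j)%N /\ P j.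

Definition nextP N := epsilon (inhabits 0%N)
  (fun j => ((N <= j)%N /\ P j) /\ forall j', (j' < j)%N -> ~ ((N <= j')%N /\ P j')).

Lemma nextP_spec N : (N <= nextP N)%N /\ P (nextP N) /\
  forall j', (N <= j')%N -> (j' < nextP N)%N -> ~ P j'.
Proof.
have Hex := minimal (fun j => (N <= j)%N /\ P j) (Hinf N).
have := epsilon_spec (inhabits 0%N) _ Hex.
rewrite -/(nextP N) => [[[a b] c]]. split => //. split => // j' h h' hp. exact: c _ h' (conj h hp).
Qed.

Fixpoint phi t := match t with 0 => nextP 0 | t'.+1 => nextP (phi t').+1 end.

Lemma phi_mono t : (phi t < phi t.+1)%N.
Proof. have [h _] := nextP_spec (phi t).+1. exact: h. Qed.

Lemma phi_P t : P (phi t).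
Proof.
case: t => [|t] /=; [have [_ [h _]] := nextP_spec 0 | have [_ [h _]] := nextP_spec (phi t).+1]; exact: h.
Qed.

Lemma phi_gap t j : (phi t < j)%N -> (j < phi t.+1)%N -> ~ P j.
Proof. move=> h1 h2. have [_ [_ h]] := nextP_spec (phi t).+1. exact: h. Qed.

Lemma phi_before j : (j < phi 0)%N -> ~ P j.
Proof. have [_ [_ h]] := nextP_spec 0. move=> hj. exact: h. Qed.

Lemma phi_bracket j : (phi 0 <= j)%N -> exists t, (phi t <= j < phi t.+1)%N.
Proof.
elim: j => [|j IH] h.
  exists 0%N. move: h; rewrite leqn0 => /eqP h0. have := phi_mono 0. by rewrite h0.
case: (ltngtP (phi 0) j.+1) h => // [hlt|Eq] _.
  have [t /andP [h1 h2]] := IH hlt.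
  case: (ltngtP j.+1 (phi t.+1)) => [h3|h3|h3].
  - exists t. by rewrite h3 (leq_trans h1 (leqnSn j)).
  - by move: h2; rewrite ltnNge -ltnS h3.
  - exists t.+1. by rewrite h3 leqnn phi_mono.
exists 0%N. by rewrite Eq leqnn /= -Eq phi_mono.
Qed.

Lemma phi_enum j : P j <-> exists t, phi t = j.
Proof.
split; last by move=> [t <-]; exact: phi_P.
move=> hj. case: (leqP (phi 0) j) => h0; last by case: (phi_before _ h0).
have [t /andP [h1 h2]] := phi_bracket _ h0.
exists t. case: (ltngtP (phi t) j) h1 => //.
- move=> hlt _. by case: (phi_gap _ _ hlt h2).
Qed.

End Enum.

Section CaseB2.
Context {l m n : nat} (E : roMPG (l + m) (l + n)).
Hypothesis HE : is_roPG E.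
Variable i : 'I_m.
Notation RE := (rotrace E).
Notation f := (Wmp E).
Notation u := (tr_seq (Wmp E) i).
Notation ent := (ent E i).
Notation seg := (seg E).
Notation Qs := (Qs E i).
Let dE := det_of E HE.

Lemma caseB : (forall K, nextk (f (ent K)) <> None) -> Strace f i = Wmp RE i.
Proof.
move=> HB.
pose P j := seg (ent j) <> [::].
have Hinf : forall N, exists j, (N <= j)%N /\ P j := inf_nonempty E HE i HB.
pose ph := phi P.
have Qs_const : forall a b, (a <= b)%N -> (forall j, (a <= j)%N -> (j < b)%N -> seg (ent j) = [::]) ->
    Qs b = Qs a.
  move=> a; elim=> [|b IH] hab H; first by move: hab; rewrite leqn0 => /eqP ->.
  move: hab; rewrite leq_eqVlt => /orP [/eqP -> //|hab].
  rewrite Qs_S (H b) ?cats0; [|by rewrite -ltnS|by []].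
  apply: IH; first by rewrite -ltnS.
  move=> j h1 h2. apply: H => //. exact: ltnW.
have Qs_pre : forall K1 K2, (K1 <= K2)%N -> exists r, Qs K2 = Qs K1 ++ r.
  move=> K1; elim=> [|K2 IH] h.
    move: h; rewrite leqn0 => /eqP ->. exists [::]. by rewrite cats0.
  move: h; rewrite leq_eqVlt => /orP [/eqP ->|h]; first by exists [::]; rewrite cats0.
  have [r Er] := IH h. exists (r ++ seg (ent K2)). by rewrite Qs_S Er catA.
have emp : forall j, ~ P j -> seg (ent j) = [::] by move=> j hj; apply: NNPP.
have Q0 : Qs (ph 0%N) = [::].
  rewrite (Qs_const 0%N) //. move=> j _ hj. apply: emp. exact: phi_before hj.
have QS : forall t, Qs (ph t.+1) = Qs (ph t) ++ seg (ent (ph t)).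
  move=> t. rewrite -Qs_S. apply: Qs_const; first exact: phi_mono.
  move=> j h1 h2. apply: emp. exact: phi_gap h1 h2.
pose nn t := size (Qs (ph t)).
pose L := #|pos E|.
have seg_size : forall j, (0 < size (seg (ent j)) <= L)%N \/ ~ P j.
  move=> j. case: (classic (P j)) => hP; last by right.
  left. have [k hk] := nkB E i HB j. have [hp _] := seg_spec E HE _ _ hk.
  rewrite (uniq_size _ (pc_uniq E dE _ _ _ hp)) andbT lt0n size_eq0. by apply/eqP.
have nn_prop : forall t, (nn t < nn t.+1 <= nn t + L)%N.
  move=> t. rewrite /nn QS size_cat -{1}[size (Qs (ph t))]addn0 ltn_add2l leq_add2l.
  case: (seg_size (ph t)) => // h. by case: (h (phi_P _ _ t)).
have nn0 : nn 0%N = 0%N by rewrite /nn Q0.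
have nn_ge : forall t, (t <= nn t)%N.
  elim=> [//|t IH]. have /andP [h _] := nn_prop t. exact: leq_ltn_trans IH h.
have := phi_P P Hinf 0%N. rewrite /P. case: (seg (ent (ph 0%N))) => [//|q0 _] _.
pose s' j := nth q0 (Qs (ph j.+1)) j.
have s_prop : forall K j, (j < size (Qs K))%N -> s' j = nth q0 (Qs K) j.
  move=> K j hj.
  have [r1 E1] := Qs_pre K (maxn K (ph j.+1)) (leq_maxl _ _).
  have [r2 E2] := Qs_pre (ph j.+1) (maxn K (ph j.+1)) (leq_maxr _ _).
  have hj2 : (j < size (Qs (ph j.+1)))%N := leq_trans (ltnSn j) (nn_ge j.+1).
  rewrite /s' -(nth_pre q0 _ r2 _ hj2) -E2 E1 nth_pre //.
have psum_v : forall t, psum (fun t => weight_of (u (ph t))) t = sumw wt (Qs (ph t)).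
  elim=> [|t IH] /=; first by rewrite Q0.
  rewrite IH QS sumw_cat (u_ent E i _ (ContB E i HB _)).
  have [k hk] := nkB E i HB (ph t). by rewrite (weight_seg E HE _ _ hk).
have psum_w : forall t, psum (fun j => wt (s' j)) (nn t) = sumw wt (Qs (ph t)).
  move=> t. rewrite -(psum_nth q0). apply: psum_ext => j hj. by rewrite (s_prop (ph t)).
have [B HB'] := fin_bound (@wt _ _ E).
have Hmean : mean_liminf_nonneg (fun j => wt (s' j)) <->
             mean_liminf_nonneg (fun t => weight_of (u (ph t))).
  rewrite !mean_RC. apply: (seg_RC _ _ nn B L) => // t. by rewrite psum_v psum_w.
have Hpath : inf_path RE i s'.
  apply: (inf_of_prefix _ _ _ 0%N) => N _.
  pose K := ph N.+1.
  have [k hk] := nkB E i HB K.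
  have [hp _] := seg_spec E HE _ _ hk.
  have X := reach E HE i K (ContB E i HB K) _ _ (xc_of_pc _ _ _ _ hp).
  rewrite -Qs_S in X.
  have hsz : (N < size (Qs K.+1))%N.
    rewrite Qs_S size_cat. apply: leq_trans (leq_addr _ _). exact: leq_trans (ltnSn N) (nn_ge N.+1).
  have Edec : Qs K.+1 = mkseq s' N ++ s' N :: drop N.+1 (Qs K.+1).
    rewrite -{1}(cat_take_drop N (Qs K.+1)) (drop_nth q0 hsz) (s_prop K.+1 N hsz).
    congr (_ ++ _). apply: (@eq_from_nth _ q0).
      by rewrite size_mkseq size_takel // ltnW.
    move=> j. rewrite size_takel ?(ltnW hsz) // => hj.
    rewrite nth_take // nth_mkseq // (s_prop K.+1) //. exact: ltn_trans hj hsz.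
  rewrite Edec in X. apply/pc_rot. exact: xc_pre X.
have Hwl : forall j, is_wl (u j) <-> P j.
  move=> j. exact: (wl_u E HE i j.+1 j (ContB E i HB _) (ltnSn j)).
have Hnn : forall j, u j <> None.
  move=> j. by rewrite (u_ent E i _ (ContB E i HB _)).
have dR := det_tr E dE.
have Hen : forall j, is_wl (u j) <-> exists t, ph t = j.
  move=> j. rewrite Hwl. exact: phi_enum.
case: (classic (mean_liminf_nonneg (fun t => weight_of (u (ph t))))) => Hm.
- rewrite (Strace_eq _ _ TEx).
    symmetry. apply: Wmp_eq => //. right. exists s'. split => //. left. split => //. by apply/Hmean.
  right; right; right; right. split => //. exists ph. split; first exact: phi_mono.
  split => //. by left.
- rewrite (Strace_eq _ _ TAll).
    symmetry. apply: Wmp_eq => //. right. exists s'. split => //. right. split => //. by rewrite Hmean.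
  right; right; right; right. split => //. exists ph. split; first exact: phi_mono.
  split => //. by right.
Qed.

Lemma trace_i : Strace f i = Wmp RE i.
Proof.
case: (classic (exists K, nextk (f (ent K)) = None)) => [HA|HB].
  have [K [hK hmin]] := minimal _ HA. refine (caseA E HE i K _ hK). intros j hj. exact (hmin j hj).
apply: caseB => K hK. apply: HB. by exists K.
Qed.

End CaseB2.


Theorem theoremD5 :
  (forall (m l n : nat) (C : roMPG m l) (D : roMPG l n),
      is_roPG C -> is_roPG D ->
      Wmp (roseq C D) = Scomp (Wmp C) (Wmp D)) /\
  (forall (m1 n1 m2 n2 : nat) (C : roMPG m1 n1) (D : roMPG m2 n2),
      is_roPG C -> is_roPG D ->
      Wmp (rosum C D) = Ssum (Wmp C) (Wmp D)) /\
  (forall (l m n : nat) (E : roMPG (l + m) (l + n)),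
      is_roPG E ->
      Strace (Wmp E) = Wmp (rotrace E)).
Proof.
split; [|split].
- move=> m l n C D HC HD. apply: functional_extensionality => i.
  exact: (part1_i C D (det_of C HC) (det_of D HD) (entr_succ C HC) (entr_succ D HD) i).
- move=> m1 n1 m2 n2 C D HC HD. apply: functional_extensionality => i.
  exact: (part2_i C D (det_of C HC) (det_of D HD) (entr_succ C HC) (entr_succ D HD) i).
- move=> l m n E HE. apply: functional_extensionality => i.
  exact: (trace_i E HE i).
Qed.
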